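(* If $G$ is a connected graph of order $n$ with minimum degree $\delta(G)\ge (n-2)/3$, then $G$ is detour covered.
   Context: All graphs are finite and simple. A detour of a graph is a longest path in it. A graph is detour covered if every vertex lies in some detour. *)

(* Defs.v *)
From mathcomp Require Import all_boot.
Set Implicit Arguments. Unset Strict Implicit. Unset Printing Implicit Defensive.

Definition simple_graph (T : finType) (e : rel T) : Prop :=
  symmetric e /\ irreflexive e.

Definition is_gpath (T : finType) (e : rel T) (p : seq T) : bool :=
  match p with
  | [::] => false
  | x :: q => path e x q && uniq p
  end.

Definition gpath_length (T : finType) (p : seq T) : nat := (size p).-1.

Definition is_detour (T : finType) (e : rel T) (p : seq T) : Prop :=
  is_gpath e p /\
  forall q : seq T, is_gpath e q -> gpath_length q <= gpath_length p.

Definition detour_covered (T : finType) (e : rel T) : Prop :=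
  forall v : T, exists p : seq T, is_detour e p /\ v \in p.

Definition connected_graph (T : finType) (e : rel T) : Prop :=
  forall x y : T, connect e x y.

Definition degree (T : finType) (e : rel T) (v : T) : nat := #|[set w | e v w]|.

(* Main.v *)
Require Import Defs.
From mathcomp Require Import all_boot.
From Stdlib Require Import Classical_Prop.
From mathcomp Require Import zify.
Set Implicit Arguments. Unset Strict Implicit. Unset Printing Implicit Defensive.

Section Gp.
Variables (T : finType) (e : rel T).
Hypothesis esym : symmetric e.

Notation gp := (is_gpath e).

Lemma gp_join (d : T) s1 s2 : gp s1 -> gp s2 -> e (last d s1) (head d s2) ->
  (forall w, w \in s1 -> w \in s2 -> False) -> gp (s1 ++ s2).
Proof.
case: s1 => [|x s1] //; case: s2 => [|y s2] // /andP[p1 u1] /andP[p2 u2] exy dis.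
rewrite /= cat_path p1 /= exy p2 /=.
have U : uniq ((x :: s1) ++ (y :: s2)).
  rewrite cat_uniq u1 u2 andbT; apply/hasPn => w ws; apply/negP => wx; exact: (dis w wx ws).
exact U.
Qed.

Lemma gp_catl s1 s2 : gp (s1 ++ s2) -> s1 != [::] -> gp s1.
Proof.
case: s1 => [|x s1] // H _; case/andP: H => p u.
rewrite cat_path in p; case/andP: p => p _.
have : uniq ((x :: s1) ++ s2) := u.
by rewrite cat_uniq => /and3P[u1 _ _]; rewrite /= p.
Qed.

Lemma gp_catr s1 s2 : gp (s1 ++ s2) -> s2 != [::] -> gp s2.
Proof.
case: s2 => [|y s2] // H _; case: s1 H => [|x s1] // H; case/andP: H => p u.
rewrite cat_path in p; case/andP: p => _ /= /andP[_ p].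
have : uniq ((x :: s1) ++ (y :: s2)) := u.
by rewrite cat_uniq => /and3P[_ _ u2]; rewrite /= p.
Qed.

Lemma gp_rev s : gp (rev s) = gp s.
Proof.
case: s => [|x s] //.
have -> : rev (x :: s) = last x s :: rev (belast x s) by rewrite lastI rev_rcons.
have U : uniq (last x s :: rev (belast x s)) = uniq (x :: s).
  by rewrite -rev_rcons -lastI rev_uniq.
rewrite /is_gpath U rev_path (@eq_path _ _ e) //.
Qed.

Lemma gp_uniq s : gp s -> uniq s.
Proof. by case: s => [|x s] // /andP[]. Qed.

Lemma gp_nil s : gp s -> s != [::].
Proof. by case: s. Qed.

Lemma gp_take s k : gp s -> 0 < k -> gp (take k s).
Proof.
move=> g k0; have g2 : gp (take k s ++ drop k s) by rewrite cat_take_drop.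
apply: (gp_catl g2); case: s g {g2} => [|x s] //; by case: k k0.
Qed.

Lemma gp_drop s k : gp s -> k < size s -> gp (drop k s).
Proof.
move=> g ks; have g2 : gp (take k s ++ drop k s) by rewrite cat_take_drop.
apply: (gp_catr g2); by rewrite -size_eq0 size_drop -lt0n subn_gt0.
Qed.

Lemma last_drop (d : T) s k : k < size s -> last d (drop k s) = last d s.
Proof.
move=> ks; rewrite -{2}(cat_take_drop k s) last_cat.
by rewrite (drop_nth d ks).
Qed.

Lemma head_take (d : T) s k : 0 < k -> head d (take k s) = head d s.
Proof. by case: s => [|x s]; case: k. Qed.

Lemma gp_rot (d : T) s k : gp s -> e (last d s) (head d s) -> gp (rot k s).
Proof.
move=> g el.
case: (leqP (size s) k) => [ks|ks]; first by rewrite rot_oversize.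
case: k ks => [|k] ks; first by rewrite rot0.
rewrite /rot; apply: (gp_join (d:=d)).
- exact: gp_drop.
- exact: gp_take.
- by rewrite last_drop // head_take.
- move=> w w1 w2; have := gp_uniq g; rewrite -(cat_take_drop k.+1 s) cat_uniq.
  case/and3P=> _ /hasPn H _; by move: (H w w1); rewrite w2.
Qed.
Lemma gp_cons_join (d : T) x s : gp s -> e x (head d s) -> x \notin s -> gp (x :: s).
Proof.
move=> g ex xs; have -> : x :: s = [:: x] ++ s by [].
apply: (gp_join (d:=d)) => // w; rewrite inE => /eqP -> ws; by rewrite ws in xs.
Qed.

Lemma last_take (d : T) s i : i < size s -> last d (take i.+1 s) = nth d s i.
Proof. by move=> iS; rewrite (take_nth d iS) last_rcons. Qed.

Lemma head_drop (d : T) s i : head d (drop i s) = nth d s i.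
Proof. by rewrite -nth0 nth_drop addn0. Qed.

End Gp.

Lemma take_drop_disj (T : eqType) (s : seq T) k k' w : uniq s -> k <= k' ->
  w \in take k s -> w \in drop k' s -> False.
Proof.
move=> u kk wt wd; move: u; rewrite -(cat_take_drop k' s) cat_uniq => /and3P[_ /hasPn H _].
have := H w wd; rewrite -(take_takel s kk) in wt; by rewrite (mem_take wt).
Qed.


Lemma spacing (s : seq nat) a b : s != [::] -> all (fun i => a <= i <= b) s ->
  pairwise (fun i j => i + 3 <= j) s -> a + 3 * size s <= b + 3.
Proof.
elim: s a => [|x s IH] a // _ /= /andP[/andP[ax xb] al] /andP[ps pw].
case: s IH al ps pw => [|y s] IH al ps pw; first by rewrite /= muln1 leq_add2r (leq_trans ax xb).
have := IH (x + 3) isT.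
have al2 : all (fun i => x + 3 <= i <= b) (y :: s).
  apply/allP => i ii; move/allP: ps => /(_ i ii) ->; by move/allP: al => /(_ i ii) /andP[].
move=> /(_ al2 pw) H; have E : size (y :: s) = (size s).+1 by [].
rewrite E in H; lia.
Qed.

Lemma conn_closed (T : finType) (r : rel T) (S : pred T) x y : S x ->
  (forall a b, S a -> r a b -> S b) -> connect r x y -> S y.
Proof.
move=> Sx cl /connectP[p pp ->]; elim: p x Sx pp => [|z p IH] x Sx //= /andP[rz pp].
exact: (IH z (cl _ _ Sx rz) pp).
Qed.

Lemma ex_max (Pr : nat -> Prop) m n0 : Pr n0 -> (forall n, Pr n -> n <= m) ->
  exists n, Pr n /\ forall k, Pr k -> k <= n.
Proof.
elim: m n0 => [|m IH] n0 P0 ub.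
  by exists n0; split => // k /ub; rewrite leqn0 => /eqP->.
case: (classic (Pr m.+1)) => [Pm|nPm]; first by exists m.+1.
apply: (IH n0 P0) => n Pn; have := ub n Pn; rewrite leq_eqVlt => /orP[/eqP Hn|//].
by rewrite Hn in Pn.
Qed.

Lemma ex_min (Pr : nat -> Prop) n0 : Pr n0 -> exists n, Pr n /\ forall k, Pr k -> n <= k.
Proof.
elim: n0 {-2}n0 (leqnn n0) => [|m IH] n0 le P0.
  by exists n0; split => // k _; move: le; rewrite leqn0 => /eqP->.
case: (classic (exists k, Pr k /\ k < n0)) => [[k [Pk kn]]|H].
  apply: (IH k _ Pk); by rewrite -ltnS (leq_trans kn le).
exists n0; split => // k Pk; case: (leqP n0 k) => // kn; exfalso; apply: H; by exists k.
Qed.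

Lemma head_rev (T : Type) (d : T) s : head d (rev s) = last d s.
Proof. by case/lastP: s => [|s x] //; rewrite rev_rcons last_rcons. Qed.

Lemma last_rev (T : Type) (d : T) s : last d (rev s) = head d s.
Proof. by case: s => [|x s] //; rewrite rev_cons last_rcons. Qed.

Lemma head_in (T : eqType) (d : T) s : s != [::] -> head d s \in s.
Proof. by case: s => // x s _; rewrite mem_head. Qed.

Lemma last_in (T : eqType) (d : T) s : s != [::] -> last d s \in s.
Proof. by case: s => // x s _; rewrite /= mem_last. Qed.

Lemma count_card (T : finType) (s : seq T) (a : pred T) :
  uniq s -> count a s = #|[set w in s | a w]|.
Proof.
move=> u; have := filter_uniq a u; move/card_uniqP => E.
rewrite -size_filter -E -cardsE.
by apply: eq_card => w; rewrite !inE mem_filter andbC.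
Qed.

Section Main.
Variables (T : finType) (e : rel T).
Hypothesis esym : symmetric e.
Hypothesis eirr : irreflexive e.
Hypothesis econn : forall x y : T, connect e x y.
Hypothesis Hdeg : forall w : T, #|T| <= 3 * degree e w + 2.
Variable v : T.
Variable L : nat.
Notation gp := (is_gpath e).
Hypothesis HL : forall p, gp p -> size p <= L.
Hypothesis Hv : forall p, gp p -> v \in p -> size p < L.

Definition avoid (P : seq T) : rel T := [rel a b | e a b && (a \notin P) && (b \notin P)].
Definition Cset (P : seq T) : {set T} := [set w | connect (avoid P) v w].

Variable P : seq T.
Hypothesis gP : gp P.
Hypothesis sP : size P = L.
Hypothesis Pmin : forall P', gp P' -> size P' = L -> #|Cset P| <= #|Cset P'|.

Notation C := (Cset P).

Lemma vP : v \notin P.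
Proof. by apply/negP => vp; have := Hv gP vp; rewrite sP ltnn. Qed.

Lemma avoid_last x p : path (avoid P) x p -> x \notin P -> last x p \notin P.
Proof.
elim: p x => [|y p IH] x //= /andP[/andP[/andP[_ _ yP] pp] _].
exact: IH.
Qed.

Lemma inC_notP w : w \in C -> w \notin P.
Proof.
rewrite inE => /connectP[p pp ->]; exact: (avoid_last pp vP).
Qed.

Lemma vC : v \in C.
Proof. by rewrite inE connect0. Qed.

Lemma C_closed u w : u \in C -> e u w -> w \notin P -> w \in C.
Proof.
move=> uC euw wP; move: (uC); rewrite !inE => cu.
apply: (connect_trans cu); apply: connect1; by rewrite /avoid /= euw (inC_notP uC) wP.
Qed.

Lemma cardLC : L + #|C| <= #|T|.
Proof.
have D : [set w in P] :&: C = set0.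
  apply/setP => w; rewrite in_setI in_set0 [w \in [set w in P]]inE.
  case wC: (w \in C); last by rewrite andbF.
  by rewrite (negbTE (inC_notP wC)).
have := cardsUI [set w in P] C; have E : #|[set w in P]| = size P by rewrite cardsE; apply/card_uniqP; exact: gp_uniq gP.
rewrite D cards0 addn0 E sP => <-.
exact: max_card.
Qed.

Lemma attach : exists z, z \in C /\ exists x, x \in P /\ e z x.
Proof.
apply: NNPP => H.
have cl : forall a b, a \in C -> e a b -> b \in C.
  move=> a b aC eab; case bP: (b \in P).
    by exfalso; apply: H; exists a; split => //; exists b.
  by apply: (C_closed aC eab); rewrite bP.
have hP : head v P \in P by apply: head_in; exact: gp_nil gP.
have := @conn_closed _ e (mem C) v (head v P) vC cl (econn v _).
by move=> /inC_notP; rewrite hP.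
Qed.


Lemma splice_gp i k S : i < k -> k < L -> gp S -> (forall w, w \in S -> w \notin P) ->
  e (nth v P i) (head v S) -> e (last v S) (nth v P k) ->
  gp (take i.+1 P ++ S ++ drop k P).
Proof.
move=> ik kL gS SP e1 e2.
have iP : i < size P by rewrite sP; apply: ltn_trans ik kL.
have kP : k < size P by rewrite sP.
apply: (gp_join (d:=v)).
- exact: gp_take.
- apply: (gp_join (d:=v)) => //; first exact: gp_drop.
    by rewrite head_drop.
  by move=> w /SP wP /mem_drop wP'; rewrite wP' in wP.
- rewrite last_take //; case: S gS e1 {SP e2} => //.
- move=> w wt; rewrite mem_cat => /orP[wS|wd].
    by have := SP w wS; rewrite (mem_take wt).
  exact: (take_drop_disj (gp_uniq gP) ik wt wd).
Qed.

Lemma size_splice i k (S : seq T) : i < k -> k < L ->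
  size (take i.+1 P ++ S ++ drop k P) = i.+1 + size S + (L - k).
Proof.
move=> ik kL; have iL : i.+1 <= size P by rewrite sP; exact: ltn_trans ik kL.
by rewrite !size_cat size_takel // size_drop sP addnA.
Qed.

Lemma avoid_sym : symmetric (avoid P).
Proof. move=> a b; rewrite /avoid /= esym; by case: (a \in P); case: (b \in P); rewrite ?andbT ?andbF. Qed.

Lemma avoid_notP x p : path (avoid P) x p -> forall w, w \in p -> w \notin P.
Proof.
elim: p x => [|y p IH] x // /andP[Hxy pp] w.
rewrite in_cons => /orP[/eqP->|]; last exact: IH pp w.
by move: Hxy; rewrite /avoid /= => /andP[_ ->].
Qed.

Lemma main_lemma z Q : z \in C -> (exists x, x \in P /\ e z x) -> gp Q ->
  {subset Q <= C} -> v \in Q -> last v Q = z ->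
  #|[set w in C | e z w]| < size Q -> False.
Proof.
move=> zC [x [xP ezx]] gQ QC vQ lQ cardN.
have zP := inC_notP zC.
have QP : forall w, w \in Q -> w \notin P := fun w wQ => inC_notP (QC w wQ).
set q := size Q.
set X := [seq i <- iota 0 L | e z (nth v P i)].
have Xrange : forall i, i \in X -> (q.+1 <= i) && (i + q + 2 <= L).
  move=> i; rewrite mem_filter mem_iota add0n => /andP[ez /andP[_ iL]].
  have iP : i < size P by rewrite sP.
  apply/andP; split.
  - have g2 : gp (rev (drop i P) ++ rev Q).
      apply: (gp_join (d:=v)).
      + by rewrite (gp_rev esym); exact: gp_drop gP iP.
      + by rewrite (gp_rev esym).
      + by rewrite last_rev head_rev lQ head_drop esym.
      + by move=> w; rewrite !mem_rev => /mem_drop wP /QP; rewrite wP.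
    have := Hv g2; rewrite mem_cat !mem_rev vQ orbT => /(_ isT).
    rewrite size_cat !size_rev size_drop sP -/q; move: iL; clear; lia.
  - have g1 : gp (take i.+1 P ++ rev Q).
      apply: (gp_join (d:=v)).
      + exact: gp_take gP (ltn0Sn i).
      + by rewrite (gp_rev esym).
      + by rewrite last_take // head_rev lQ esym.
      + by move=> w; rewrite mem_rev => /mem_take wP /QP; rewrite wP.
    have := Hv g1; rewrite mem_cat !mem_rev vQ orbT => /(_ isT).
    rewrite size_cat !size_rev size_takel -/q //; move: iL; clear; lia.
have Xgap : forall i j, i \in X -> j \in X -> i < j -> i + 3 <= j.
  move=> i j iX jX ij; rewrite leqNgt; apply/negP => ji.
  move: iX jX; rewrite !mem_filter !mem_iota !add0n => /andP[ezi /andP[_ iL]] /andP[ezj /andP[_ jL]].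
  have zS : forall w, w \in [:: z] -> w \notin P by move=> w; rewrite inE => /eqP->.
  have ezi' : e (nth v P i) (head v [:: z]) by rewrite /= esym.
  case: (j =P i.+1) => [Ej|Nj].
    rewrite Ej in ezj jL.
    have g := splice_gp (ltnSn i) jL (isT : gp [:: z]) zS ezi' ezj.
    have := HL g; rewrite size_splice //.
    rewrite [size [:: z]]/=; move: jL; clear; lia.
  have Ej : j = i.+2 by move: ij ji Nj; clear; lia.
  rewrite Ej in ezj jL.
  have ii2 : i < i.+2 by [].
  set P' := take i.+1 P ++ [:: z] ++ drop i.+2 P.
  have gP' : gp P' := splice_gp ii2 jL (isT : gp [:: z]) zS ezi' ezj.
  have sP' : size P' = L by rewrite /P' size_splice // [size [:: z]]/=; move: jL; clear; lia.
  have zP' : z \in P' by rewrite /P' !mem_cat mem_head orbT.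
  case: (z =P v) => [zv|zv].
    by have := Hv gP'; rewrite -zv zP' sP' ltnn => /(_ isT).
  have := Pmin gP' sP'.
  have sub : Cset P' \subset C :\ z.
    apply/subsetP => w; rewrite [w \in Cset P']inE => cw.
    apply: (@conn_closed _ (avoid P') (mem (C :\ z)) v w _ _ cw).
      by rewrite /= in_setD1 vC andbT; apply/eqP => vz; apply: zv.
    move=> a b; rewrite /= in_setD1 => /andP[az aC].
    rewrite /avoid /= => /andP[/andP[eab aP'] bP'].
    have bz : b != z by apply/eqP => bz; rewrite bz zP' in bP'.
    rewrite in_setD1 bz /=.
    case bP: (b \in P); last by apply: (C_closed aC eab); rewrite bP.
    exfalso.
    have Pdec : P = take i.+1 P ++ nth v P i.+1 :: drop i.+2 P.
      by rewrite -drop_nth ?cat_take_drop // sP; move: jL; clear; lia.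
    have bE : b = nth v P i.+1.
      move: bP; rewrite {1}Pdec mem_cat in_cons => /or3P[bt|/eqP //|bd].
        by rewrite /P' mem_cat bt in bP'.
      by rewrite /P' !mem_cat bd !orbT in bP'.
    have cza : connect (avoid P) z a.
      apply: (connect_trans (y := v)).
        by rewrite (sym_connect_sym avoid_sym); move: zC; rewrite inE.
      by move: aC; rewrite inE.
    case/connectP: cza => p pp lp.
    move: lp; case: (shortenP pp) => p' pp' up' _ lp'.
    have gS : gp (z :: p').
      apply/andP; split => //; apply: (sub_path _ pp') => c d; rewrite /avoid /= => /andP[/andP[]] //.
    have SP : forall u, u \in z :: p' -> u \notin P.
      move=> u; rewrite in_cons => /orP[/eqP->//|]; exact: avoid_notP pp' u.
    have e1 : e (nth v P i) (head v (z :: p')) by rewrite /= esym.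
    have e2 : e (last v (z :: p')) (nth v P i.+1) by rewrite /= -lp' -bE.
    have g := splice_gp (ltnSn i) (ltn_trans (ltnSn _) jL) gS SP e1 e2.
    have := HL g; rewrite size_splice //; last exact: (ltn_trans (ltnSn _) jL).
    rewrite /=; move: jL; clear; lia.
  have : #|Cset P'| < #|C|.
    apply: (leq_ltn_trans (subset_leq_card sub)); by rewrite (cardsD1 z C) zC.
  move=> A B; by have := leq_ltn_trans B A; rewrite ltnn.
have Xpw : pairwise (fun i j => i + 3 <= j) X.
  have : sorted ltn X by apply: sorted_filter; [exact: ltn_trans | exact: iota_ltn_sorted].
  rewrite sorted_pairwise; last exact: ltn_trans.
  apply: (sub_in_pairwise (P := mem X)); last by apply/allP.
  move=> i j iX jX; exact: Xgap.
have Xn : X != [::].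
  have ix : index x P \in X.
    by rewrite mem_filter nth_index // ezx mem_iota /= -sP index_mem xP.
  by apply/eqP => E; rewrite E in ix.
have Lq : q + 2 <= L.
  have := Xrange (head 0 X) (head_in 0 Xn) => /andP[_]; move=> h; move: h; clear; lia.
have sp := spacing Xn (a := q.+1) (b := L - q - 2).
have sp2 : q.+1 + 3 * size X <= L - q - 2 + 3.
  apply: sp => //; apply/allP => i /Xrange /andP[h1 h2]; apply/andP; split => //.
  move: h2; clear; lia.
have sX : size X = count (e z) P.
  have E : P = map (nth v P) (iota 0 L) by rewrite -sP; symmetry; exact: mkseq_nth.
  by rewrite size_filter; symmetry; rewrite {1}E count_map.
have degz : degree e z <= #|[set w in C | e z w]| + count (e z) P.
  rewrite (count_card _ (gp_uniq gP)) /degree.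
  have sub : [set w | e z w] \subset [set w in C | e z w] :|: [set w in P | e z w].
    apply/subsetP => w; rewrite inE => ezw; rewrite in_setU.
    case wP: (w \in P); first by rewrite orbC inE wP ezw.
    by rewrite in_set ezw andbT (C_closed zC ezw) ?wP.
  apply: (leq_trans (subset_leq_card sub)).
  by rewrite cardsU leq_subr.
have cQ : q <= #|C|.
  have := gp_uniq gQ; move/card_uniqP; rewrite -/q => <-.
  by apply: subset_leq_card; apply/subsetP => w wQ; exact: QC.
have LC := cardLC.
have H := Hdeg z.
move: cardN sp2 sX degz cQ LC H Lq; rewrite -/q.
move: (#|[set w in C | e z w]|) (size X) (count (e z) P) (degree e z) #|C| #|T| => a b c d f g.
clear; lia.
Qed.

Lemma noext_head w : e (head v P) w -> w \in P.
Proof.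
move=> ew; apply/negPn/negP => wP.
have g : gp (w :: P) by apply: (gp_cons_join (d:=v)) => //; rewrite esym.
by have := HL g; rewrite /= sP ltnn.
Qed.

Lemma noext_last w : e (last v P) w -> w \in P.
Proof.
move=> ew; apply/negPn/negP => wP.
have g : gp (P ++ [:: w]).
  apply: (gp_join (d:=v)) => // u uP; rewrite inE => /eqP uw; by rewrite -uw uP in wP.
by have := HL g; rewrite size_cat /= sP addn1 ltnn.
Qed.

Lemma cyc i : i.+1 < L -> e (head v P) (nth v P i.+1) -> e (last v P) (nth v P i) -> False.
Proof.
move=> iL e1 e2.
have iP : i.+1 < size P by rewrite sP.
have iP' : i < size P by rewrite sP; exact: ltn_trans (ltnSn _) iL.
set Cy := take i.+1 P ++ rev (drop i.+1 P).
have gCy : gp Cy.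
  apply: (gp_join (d:=v)).
  - exact: gp_take gP (ltn0Sn i).
  - by rewrite (gp_rev esym); exact: gp_drop gP iP.
  - by rewrite last_take // head_rev last_drop // esym.
  - by move=> w wt; rewrite mem_rev => wd; exact: (take_drop_disj (gp_uniq gP) (leqnn _) wt wd).
have clo : e (last v Cy) (head v Cy).
  rewrite /Cy last_cat last_rev head_drop (set_nth_default v) //.
  have -> : head v (take i.+1 P ++ rev (drop i.+1 P)) = head v P.
    by case: P gP => [|a p] //.
  by rewrite esym.
have [z [zC [x [xP ezx]]]] := attach.
have xCy : x \in Cy.
  by move: xP; rewrite -{1}(cat_take_drop i.+1 P) /Cy !mem_cat mem_rev.
case: (rot_to xCy) => k s' E.
have gR : gp (rot k Cy) := gp_rot k gCy clo.
rewrite E in gR.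
have zs : z \notin x :: s'.
  apply/negP; rewrite -E mem_rot /Cy mem_cat mem_rev => /orP[/mem_take|/mem_drop] zP;
  by have := inC_notP zC; rewrite zP.
have g : gp (z :: x :: s') by apply: (gp_cons_join (d:=v)).
have := HL g.
have : size (x :: s') = L by rewrite -E size_rot /Cy size_cat size_rev size_takel ?size_drop ?sP; [move: iL; clear; lia| exact: ltnW].
by move=> /= ->; rewrite ltnn.
Qed.

Lemma factA : degree e (head v P) + degree e (last v P) < L.
Proof.
set x0 := head v P; set xl := last v P.
have Pn := gp_nil gP.
have L1 : 0 < L by rewrite -sP lt0n size_eq0.
set I1 := [seq i <- iota 0 L.-1 | e x0 (nth v P i.+1)].
set I2 := [seq i <- iota 0 L.-1 | e xl (nth v P i)].
have d0 : degree e x0 = count (e x0) P.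
  rewrite (count_card _ (gp_uniq gP)) /degree; apply: eq_card => w; rewrite !inE.
  case ew: (e x0 w); last by rewrite andbF.
  by rewrite (noext_head ew).
have dl : degree e xl = count (e xl) P.
  rewrite (count_card _ (gp_uniq gP)) /degree; apply: eq_card => w; rewrite !inE.
  case ew: (e xl w); last by rewrite andbF.
  by rewrite (noext_last ew).
have s1 : size I1 = degree e x0.
  rewrite d0 size_filter.
  have E : behead P = map (fun i => nth v P i.+1) (iota 0 L.-1).
    rewrite -sP -size_behead -{1}(mkseq_nth v (behead P)) /mkseq.
    by apply: eq_map => i; rewrite nth_behead.
  have -> : count (e x0) P = count (e x0) (behead P).
    by rewrite /x0; case: P Pn => [|a p] //= _; rewrite eirr.
  by rewrite E count_map.
have s2 : size I2 = degree e xl.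
  rewrite dl size_filter.
  have E : P = map (nth v P) (iota 0 L) by rewrite -sP; symmetry; exact: mkseq_nth.
  have iE : iota 0 L = iota 0 L.-1 ++ [:: L.-1] by rewrite -{1}(prednK L1) -addn1 iotaD.
  rewrite {2}E count_map iE count_cat /=.
  have -> : nth v P L.-1 = xl by rewrite /xl -nth_last sP.
  by rewrite eirr /= !addn0.
have dis : forall i, i \in I1 -> i \in I2 -> False.
  move=> i; rewrite !mem_filter mem_iota /= add0n => /andP[ea iL] /andP[eb _].
  apply: (cyc _ ea eb); move: iL; clear; lia.
have U : uniq (I1 ++ I2).
  rewrite cat_uniq !filter_uniq ?iota_uniq // andbT /=.
  apply/hasPn => i iI2; apply/negP => iI1; exact: dis iI1 iI2.
have sub : {subset I1 ++ I2 <= iota 0 L.-1}.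
  by move=> i; rewrite mem_cat => /orP[]; rewrite mem_filter => /andP[_ ->].
have := uniq_leq_size U sub.
rewrite size_cat s1 s2 size_iota.
by move: L1; clear; lia.
Qed.

Lemma path_avoid x p : path e x p -> x \notin P -> (forall w, w \in p -> w \notin P) ->
  path (avoid P) x p.
Proof.
elim: p x => [|y p IH] x // /andP[exy pp] xP H.
have yP : y \notin P by apply: H; exact: mem_head.
apply/andP; split; first by rewrite /avoid /= exy xP yP.
apply: IH => // w wp; apply: H; by rewrite in_cons wp orbT.
Qed.

Lemma final : False.
Proof.
have [k [[D [gD [DP sD]]] maxD]] :
  exists k, (exists D, gp (v :: D) /\ (forall w, w \in D -> w \notin P) /\ size D = k) /\
    forall k', (exists D, gp (v :: D) /\ (forall w, w \in D -> w \notin P) /\ size D = k') -> k' <= k.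
  apply: (@ex_max _ #|T| 0); first by exists [::].
  move=> n' [D [gD [_ <-]]]; have := gp_uniq gD; move/card_uniqP => E.
  apply: leq_trans (max_card (mem (v :: D))); by rewrite E /=.
set DD := v :: D.
set y := last v D.
have DDC : {subset DD <= C}.
  have pa : path (avoid P) v D := path_avoid (proj1 (andP gD)) vP DP.
  move=> w wD; rewrite inE; exact: (path_connect pa wD).
have yDD : y \in DD by rewrite /y mem_last.
have yC : y \in C := DDC y yDD.
have Nbr : forall w, w \in C -> e y w -> w \in DD.
  move=> w wC ew; apply/negPn/negP => wD.
  have g : gp (DD ++ [:: w]).
    apply: (gp_join (d:=v)) => // u uD; rewrite inE => /eqP uw; by rewrite -uw uD in wD.
  have : (exists D', gp (v :: D') /\ (forall w, w \in D' -> w \notin P) /\ size D' = k.+1).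
    exists (rcons D w); split; first by rewrite -cats1.
    split; last by rewrite size_rcons sD.
    move=> u; rewrite mem_rcons in_cons => /orP[/eqP->|]; [exact: inC_notP | exact: DP].
  by move=> /maxD; rewrite ltnn.
have cardNy : #|[set w in C | e y w]| < size DD.
  have sub : [set w in C | e y w] \subset [set w in DD] :\ y.
    apply/subsetP => w; rewrite in_set => /andP[wC ew].
    rewrite in_setD1 in_set (Nbr w wC ew) andbT; apply/eqP => wy; by rewrite wy eirr in ew.
  apply: (leq_ltn_trans (subset_leq_card sub)).
  have := gp_uniq gD; move/card_uniqP => E.
  have H := cardsD1 y [set w in DD].
  rewrite cardsE E [y \in [set w in DD]]in_set yDD in H.
  by rewrite H add1n ltnSn.
have DDsize : size DD <= #|C|.
  have := gp_uniq gD; move/card_uniqP => <-.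
  by apply: subset_leq_card; apply/subsetP => w wQ; exact: DDC.
case: (classic (exists x, x \in P /\ e y x)) => [att|natt].
  exact: (main_lemma yC att gD DDC (mem_head _ _) (erefl _) cardNy).
have Ny : degree e y = #|[set w in C | e y w]|.
  rewrite /degree; apply: eq_card => w.
  rewrite [w \in [set _ | e y _]]in_set [w \in [set _ in C | _]]in_set.
  case ew: (e y w); last by rewrite andbF.
  rewrite andbT; case wP: (w \in P).
    by exfalso; apply: natt; exists w.
  by rewrite (C_closed yC ew) ?wP.
case: (leqP (degree e y + 2) #|C|) => [big|small].
  have FA := factA; have LC := cardLC.
  have H1 := Hdeg (head v P); have H2 := Hdeg (last v P); have H3 := Hdeg y.
  move: FA LC H1 H2 H3 big.
  move: (degree e (head v P)) (degree e (last v P)) (degree e y) #|C| #|T| => a b c f g.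
  clear; lia.
have eqs : size DD = #|C| /\ degree e y = (size DD).-1.
  move: small DDsize cardNy; rewrite -Ny.
  move: (size DD) (degree e y) #|C| => a b c; clear; lia.
case: eqs => eqs1 eqs2.
have cDD : #|[set w in DD]| = size DD by rewrite cardsE; apply/card_uniqP; exact: gp_uniq gD.
have Ceq : forall w, w \in C -> w \in DD.
  have sub : [set w in DD] \subset C by apply/subsetP => w; rewrite in_set; exact: DDC.
  have : [set w in DD] == C by rewrite eqEcard sub cDD eqs1 leqnn.
  move/eqP => EQ w; by rewrite -EQ in_set.
have Nall : forall w, w \in DD -> w != y -> e y w.
  have sub : [set w | e y w] \subset [set w in DD] :\ y.
    apply/subsetP => w; rewrite in_set => ew; rewrite in_setD1 in_set.
    have wC : w \in C by rewrite (C_closed yC ew) //; apply/negP => wP; apply: natt; exists w.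
    rewrite (Nbr w wC ew) andbT; apply/eqP => wy; by rewrite wy eirr in ew.
  have H := cardsD1 y [set w in DD].
  rewrite cDD [y \in [set w in DD]]in_set yDD in H.
  have : [set w | e y w] == [set w in DD] :\ y.
    rewrite eqEcard sub /=; move: H eqs2; rewrite /degree => -> ->; rewrite add1n /=; by [].
  move/eqP => EQ w wD wy; have : w \in [set w in DD] :\ y by rewrite in_setD1 in_set wy wD.
  by rewrite -EQ in_set.
have [z [zC [x [xP ezx]]]] := attach.
have zy : z != y by apply/eqP => zy; apply: natt; exists x; rewrite -zy.
have zDD := Ceq z zC.
have yv : y != v.
  apply/eqP => yv; case: (D =P [::]) => [D0|/eqP Dn].
    by move: zDD zy; rewrite /DD /y D0 inE => /eqP ->; rewrite /= eqxx.
  have yD : y \in D by rewrite /y; exact: last_in.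
  move: (gp_uniq gD); rewrite cons_uniq => /andP[vD _].
  by rewrite -yv yD in vD.
have ev : e y v by apply: Nall; [exact: mem_head | by rewrite eq_sym].
case: (rot_to zDD) => r s' E.
have gR : gp (rot r DD) := gp_rot r gD (ev : e (last v DD) (head v DD)).
rewrite E in gR.
set Q := rev (z :: s').
have gQ : gp Q by rewrite /Q (gp_rev esym).
have QDD : forall w, w \in Q -> w \in DD by move=> w; rewrite /Q mem_rev -E mem_rot.
have sQ : size Q = size DD by rewrite /Q size_rev -E size_rot.
apply: (main_lemma zC (ex_intro _ x (conj xP ezx)) gQ).
- by move=> w /QDD; exact: DDC.
- by rewrite /Q mem_rev -E mem_rot mem_head.
- by rewrite /Q rev_cons last_rcons.
- rewrite sQ eqs1.
  have sub : [set w in C | e z w] \subset C :\ z.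
    apply/subsetP => w; rewrite in_set => /andP[wC ew]; rewrite in_setD1 wC andbT.
    by apply/eqP => wz; rewrite wz eirr in ew.
  apply: (leq_ltn_trans (subset_leq_card sub)).
  by rewrite (cardsD1 z C) zC add1n.
Qed.
End Main.

Theorem theorem5 (T : finType) (e : rel T) :
  simple_graph e -> connected_graph e ->
  (forall v : T, #|T| <= 3 * degree e v + 2) ->
  detour_covered e.
Proof.
move=> [esym eirr] econn Hdeg v.
apply: NNPP => Hno.
have [L [[p0 [gp0 sp0]] maxL]] :
  exists L, (exists p, is_gpath e p /\ size p = L) /\
    forall k, (exists p, is_gpath e p /\ size p = k) -> k <= L.
  apply: (@ex_max _ #|T| 1); first by exists [:: v].
  move=> n' [p [gp <-]]; have := gp_uniq gp; move/card_uniqP => <-.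
  exact: max_card.
have HL : forall p, is_gpath e p -> size p <= L.
  by move=> p g; apply: maxL; exists p.
have Hv : forall p, is_gpath e p -> v \in p -> size p < L.
  move=> p g vp; rewrite ltn_neqAle HL // andbT; apply/eqP => spL.
  apply: Hno; exists p; split => //; split => // q gq.
  rewrite /gpath_length spL; have := HL q gq; move: (size q) => a; clear; lia.
have [c [[P [gP [sP cP]]] minc]] :
  exists c, (exists P, is_gpath e P /\ size P = L /\ #|Cset e v P| = c) /\
    forall k, (exists P, is_gpath e P /\ size P = L /\ #|Cset e v P| = k) -> c <= k.
  by apply: ex_min; exists p0.
apply: (final esym eirr econn Hdeg HL Hv gP sP) => P' gP' sP'.
by rewrite cP; apply: minc; exists P'.
Qed.
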